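(* Let $n\geq 2$. $\mathrm{Aut}(\mathbf{D}_n)$ acts continuously and transitively on $\mathcal{R}_n$ via the logic action $g\cdot(\prec_1,\ldots,\prec_n)=(\prec_1^g,\ldots,\prec_n^g)$, where $\mathbf{a}\prec_i^g\mathbf{b}$ iff $g^{-1}(\mathbf{a})\prec_ig^{-1}(\mathbf{b})$, for all $i\leq n$, $\mathbf{a},\mathbf{b}\in D_n$ and $g\in\mathrm{Aut}(\mathbf{D}_n)$ (in particular this action maps $\mathcal{R}_n$ into itself).
   Context: Fix $n\geq 2$ and a set $D_n\subseteq\mathbb{Q}^n$ which is dense in $\mathbb{Q}^n$ (product topology) and such that no two distinct points of $D_n$ share a common coordinate. $\mathbf{D}_n=(D_n,<)$ with $<$ the product order ($\mathbf{a}<\mathbf{b}$ iff $a_i\leq b_i$ for all $i$ and $\mathbf{a}\neq\mathbf{b}$); $\mathrm{Aut}(\mathbf{D}_n)$ carries the topology of pointwise convergence. $\mathcal{R}_n$ is the set of $n$-tuples $(\prec_1,\ldots,\prec_n)$ of strict linear orders on $D_n$ with $\prec_1\cap\cdots\cap\prec_n\;=\;<$, topologized as a subspace of $(\{0,1\}^{D_n^2})^n$. *)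

(* Defs.v *)
From HB Require Import structures.
From mathcomp Require Import all_boot all_order all_algebra.
From mathcomp Require Import all_classical all_reals all_analysis.
Set Implicit Arguments. Unset Strict Implicit. Unset Printing Implicit Defensive.
Import Order.TTheory GRing.Theory Num.Theory.
Local Open Scope classical_set_scope.
Local Open Scope ring_scope.

(* Q^n with the product topology of the usual (= order) topology of Q. *)
Definition Qn (n : nat) := {ptws 'I_n -> order_topology rat}.

Definition prod_lt (n : nat) (a b : Qn n) : Prop :=
  (forall i, a i <= b i) /\ a <> b.

Definition no_common_coord (n : nat) (D : set (Qn n)) : Prop :=
  forall a b, D a -> D b -> a <> b -> forall i : 'I_n, a i <> b i.

Definition Dpt (n : nat) (D : set (Qn n)) := {x : Qn n | x \in D}.

Definition Dlt (n : nat) (D : set (Qn n)) (a b : Dpt D) : Prop :=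
  prod_lt (val a) (val b).

Definition FunSp (n : nat) (D : set (Qn n)) :=
  {ptws Dpt D -> discrete_topology (Dpt D)}.

Definition AutD (n : nat) (D : set (Qn n)) : set (FunSp D) :=
  [set g | bijective g /\ forall a b, Dlt a b <-> Dlt (g a) (g b)].

Definition RelSp (n : nat) (D : set (Qn n)) :=
  {ptws 'I_n -> {ptws (Dpt D * Dpt D)%type -> bool}}.

Definition strict_linear_order (n : nat) (D : set (Qn n))
    (r : Dpt D * Dpt D -> bool) : Prop :=
  [/\ (forall a, ~~ r (a, a)),
      (forall a b c, r (a, b) -> r (b, c) -> r (a, c)) &
      (forall a b, a <> b -> r (a, b) \/ r (b, a))].

Definition Rn (n : nat) (D : set (Qn n)) : set (RelSp D) :=
  [set R | (forall i, strict_linear_order (R i)) /\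
           (forall a b, (forall i, R i (a, b)) <-> Dlt a b)].

(* the inverse g^{-1} of a (bijective) map g (chosen classically; for
   bijective g it is the genuine inverse) *)
Definition finv (n : nat) (D : set (Qn n)) (g : Dpt D -> Dpt D) (a : Dpt D) : Dpt D :=
  match pselect (exists x, g x = a) with
  | left e => projT1 (cid e)
  | right _ => a
  end.

Definition logic_act (n : nat) (D : set (Qn n)) (g : FunSp D) (R : RelSp D) : RelSp D :=
  fun i p => R i (finv g p.1, finv g p.2).

Arguments AutD {n} D.
Arguments Rn {n} D.

(* Main.v *)
Require Import Defs.
From mathcomp Require Import lra.
From HB Require Import structures.
From mathcomp Require Import all_boot all_order all_algebra fingroup perm.
From mathcomp Require Import all_classical all_reals all_analysis.
Local Open Scope classical_set_scope.
Set Implicit Arguments. Unset Strict Implicit. Unset Printing Implicit Defensive.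
Import Order.TTheory GRing.Theory Num.Theory.
Local Open Scope ring_scope.


Lemma lowb (U : seq rat) : exists c, forall u, u \in U -> c < u.
Proof.
elim: U => [|u U [c Hc]]; first by exists 0.
exists (Num.min c (u - 1)) => v; rewrite in_cons => /orP [/eqP ->|vU].
  by rewrite gt_min; apply/orP; right; lra.
by rewrite gt_min (Hc v vU).
Qed.

Lemma U_bound (U : seq rat) c : (forall u, u \in U -> c < u) ->
  exists hi, c < hi /\ forall u, u \in U -> hi <= u.
Proof.
elim: U => [|u U IH] H; first by exists (c + 1); split => //; lra.
have [|hi [chi Hhi]] := IH.
  by move=> v vU; apply: H; rewrite in_cons vU orbT.
have cu : c < u by apply: H; rewrite in_cons eqxx.
exists (Num.min hi u); split; first by rewrite lt_min chi cu.
move=> v; rewrite in_cons => /orP [/eqP ->|vU]; first by rewrite ge_min lexx orbT.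
by rewrite ge_min (Hhi v vU).
Qed.

Lemma seq_lohi (L U : seq rat) : (forall l u, l \in L -> u \in U -> l < u) ->
  exists lo hi, [/\ lo < hi, forall l, l \in L -> l <= lo & forall u, u \in U -> hi <= u].
Proof.
move=> H.
have [lo [Hl Hu]] : exists lo, (forall l, l \in L -> l <= lo) /\ (forall u, u \in U -> lo < u).
  elim: L H => [|l L IH] H.
    by have [c Hc] := lowb U; exists c.
  have [|lo [Hl Hu]] := IH.
    by move=> l' u l'L uU; apply: H => //; rewrite in_cons l'L orbT.
  exists (Num.max l lo); split.
    move=> v; rewrite in_cons => /orP [/eqP ->|vL]; first by rewrite le_max lexx.
    by rewrite le_max (Hl v vL) orbT.
  by move=> u uU; rewrite gt_max (Hu u uU) (H l u) // in_cons eqxx.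
have [hi [lohi Hhi]] := U_bound Hu.
by exists lo, hi.
Qed.

Lemma ptws_cvg (I : Type) (K : I -> topologicalType) (F : set_system (prod_topology K))
  (f : prod_topology K) : Filter F -> (forall i, (fun g => g i) @ F --> f i) -> F --> f.
Proof.
move=> FF H.
apply/(@cvg_sup _ _ (fun i => Topological.class (initial_topology (fun g : (forall i, K i) => g i))) F f FF) => i.
move=> A /= [_ [[B Bop <-] Bfs sBfA]].
have : nbhs (f i) B by apply: open_nbhs_nbhs; split.
move/H => FB; rewrite nbhs_filterE; exact: filterS sBfA FB.
Qed.

Section Basics.
Variable n : nat.
Variable D : set (Qn n).
Hypothesis n2 : (2 <= n)%N.
Hypothesis dD : dense D.
Hypothesis ncD : no_common_coord D.

Local Notation T := (Dpt D).

Definition co (a : T) (i : 'I_n) : rat := (val a) i.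

Lemma co_neq (a b : T) i : a <> b -> co a i <> co b i.
Proof.
move=> ab; apply: ncD.
- by apply: set_mem; exact: (valP a).
- by apply: set_mem; exact: (valP b).
- by move=> h; apply: ab; apply: val_inj.
Qed.

Lemma eq_co (a b : T) i : co a i = co b i -> a = b.
Proof. by move=> h; apply: contrapT => /(@co_neq a b i). Qed.

Lemma co_lt_total (a b : T) i : a <> b -> (co a i < co b i) || (co b i < co a i).
Proof. by move=> /(@co_neq a b i) h; rewrite -neq_lt; apply/eqP. Qed.

Lemma Dlt_co (a b : T) : Dlt a b <-> forall i, co a i < co b i.
Proof.
split.
- case=> h ab i; rewrite lt_neqAle; apply/andP; split; last exact: h.
  by apply/eqP; apply: co_neq => eab; apply: ab; rewrite eab.
- move=> h; split; first by move=> i; apply: ltW; exact: h.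
  have i0 : 'I_n by exists 0%N; apply: leq_trans n2.
  by move=> eab; move: (h i0); rewrite /co eab ltxx.
Qed.

Lemma box (lo hi : 'I_n -> rat) : (forall i, lo i < hi i) ->
  exists d : T, forall i, lo i < co d i < hi i.
Proof.
move=> lohi.
pose O := [set x : Qn n | forall i, lo i < (x i : rat) < hi i].
have oO : open O.
  rewrite openE => x Ox.
  have : nbhs x [set y : Qn n | forall i, lo i < (y i : rat) < hi i].
    apply: (@filter_forall _ _ (fun i => [set y : Qn n | lo i < (y i : rat) < hi i]) (nbhs x) _) => i.
    have h1 : nbhs (x i : order_topology rat) (`]lo i, hi i[%classic).
      apply: open_nbhs_nbhs; split; first exact: itv_open.
      by rewrite /= in_itv /=; exact: Ox.
    have := @proj_continuous 'I_n (fun _ => order_topology rat) i x _ h1.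
    move=> h2.
    have h3 : nbhs x ((@proj 'I_n (fun _ => order_topology rat) i) @^-1` `]lo i, hi i[%classic) := h2.
    apply: (filterS _ h3) => y /=; rewrite in_itv /=; exact.
  by [].
have O0 : O !=set0.
  exists (fun i => (lo i + hi i) / 2) => i; rewrite /=.
  by have [-> ->] := midf_lt (lohi i).
have [x [Ox Dx]] := dD O0 oO.
by exists (exist _ x (mem_set Dx)).
Qed.


Lemma minl (x y : rat) : Num.min x y <= x. Proof. by rewrite ge_min lexx. Qed.
Lemma minr (x y : rat) : Num.min x y <= y. Proof. by rewrite ge_min lexx orbT. Qed.
Lemma maxl (x y : rat) : x <= Num.max x y. Proof. by rewrite le_max lexx. Qed.
Lemma maxr (x y : rat) : y <= Num.max x y. Proof. by rewrite le_max lexx orbT. Qed.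

Definition epair (j : 'I_n) (a b : T) :=
  co b j < co a j /\ forall k, k != j -> co a k < co b k.

Lemma SE_ext j a b : epair j a b -> exists x y : 'I_n -> T,
  [/\ x j = a, y j = b, forall k, epair k (x k) (y k) &
      forall k k', k != k' -> forall l, co (x k) l < co (y k') l].
Proof.
move=> [abj abk].
pose low l := Num.min (co a l) (co b l) - 1.
pose high l := Num.max (co a l) (co b l) + 1.
pose mid l := (co a l + co b l) / 2.
have lowa l : low l + 1 <= co a l by rewrite /low; have := minl (co a l) (co b l); lra.
have lowb l : low l + 1 <= co b l by rewrite /low; have := minr (co a l) (co b l); lra.
have higha l : co a l + 1 <= high l by rewrite /high; have := maxl (co a l) (co b l); lra.
have highb l : co b l + 1 <= high l by rewrite /high; have := maxr (co a l) (co b l); lra.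
have H : forall k : 'I_n, exists p : T * T, k != j ->
   (forall l, if l == k then mid l < co p.1 l < co b l else low l - 1 < co p.1 l < low l) /\
   (forall l, if l == k then co a l < co p.2 l < mid l else high l < co p.2 l < high l + 1).
  move=> k; have [kj|nkj] := eqVneq k j; first by exists (a, a).
  have ab := abk k nkj.
  have [|x Hx] := @box (fun l => if l == k then mid l else low l - 1)
                     (fun l => if l == k then co b l else low l).
    by move=> l; case: eqP => [->|_]; rewrite /mid; lra.
  have [|y Hy] := @box (fun l => if l == k then co a l else high l)
                     (fun l => if l == k then mid l else high l + 1).
    by move=> l; case: eqP => [->|_]; rewrite /mid; lra.
  exists (x, y) => _; split => l /=.
    by have := Hx l; case: ifP.
  by have := Hy l; case: ifP.
have [f Hf] := choice H.
exists (fun k => if k == j then a else (f k).1), (fun k => if k == j then b else (f k).2).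
split; rewrite ?eqxx //.
- move=> k; have [->|nkj] := eqVneq k j; first by split.
  have [Hx Hy] := Hf k nkj.
  split.
    by have := Hx k; have := Hy k; rewrite eqxx; lra.
  move=> l /negPf lk; have := Hx l; have := Hy l; rewrite lk.
  have := lowa l; have := higha l; lra.
- move=> k k' kk' l.
  have [kj|nkj] := eqVneq k j; have [k'j|nk'j] := eqVneq k' j.
  + by move: kk'; rewrite kj k'j eqxx.
  + have [_ Hy] := Hf k' nk'j; have := Hy l.
    case: eqP => [->|_]; first lra.
    have := higha l; lra.
  + have [Hx _] := Hf k nkj; have := Hx l.
    case: eqP => [->|_]; first lra.
    have := lowb l; lra.
  + have [Hx _] := Hf k nkj; have [_ Hy] := Hf k' nk'j.
    have := Hx l; have := Hy l.
    case: (eqVneq l k) => [lk|lk]; case: (eqVneq l k') => [lk'|lk'].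
    * by move: kk'; rewrite -lk -lk' eqxx.
    * by have := highb l; lra.
    * by have := lowa l; lra.
    * by have := lowa l; have := higha l; lra.
Qed.


Lemma ex_epair j : exists a b, epair j a b.
Proof.
have [|a Ha] := @box (fun _ => 0) (fun _ => 1) => //.
have [|b Hb] := @box (fun l => if l == j then -2 else 2) (fun l => if l == j then -1 else 3).
  by move=> l; case: ifP.
exists a, b; split.
  by have := Ha j; have := Hb j; rewrite eqxx; lra.
by move=> k /negPf kj; have := Ha k; have := Hb k; rewrite kj; lra.
Qed.

Section Realizer.
Variable R : RelSp D.
Hypothesis RR : Rn D R.
Local Notation L i a b := (R i (a, b)).

Lemma L_irr i a : ~~ L i a a.
Proof. by case: RR => /(_ i) [] . Qed.

Lemma L_trans i a b c : L i a b -> L i b c -> L i a c.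
Proof. by case: RR => /(_ i) [] _ h _ _; apply: h. Qed.

Lemma L_tot i a b : a <> b -> L i a b \/ L i b a.
Proof. by case: RR => /(_ i) [] _ _ h _; apply: h. Qed.

Lemma L_asym i a b : L i a b -> ~~ L i b a.
Proof.
move=> h; apply/negP => h'; have := L_irr i a; by rewrite (L_trans h h').
Qed.

Lemma L_Dlt i a b : Dlt a b -> L i a b.
Proof. by case: RR => _ h /h; apply. Qed.

Lemma L_all a b : (forall i, L i a b) -> Dlt a b.
Proof. by case: RR => _ h /h. Qed.

Lemma L_fwd i a b : a <> b -> ~~ L i b a -> L i a b.
Proof. by move=> /(L_tot i) [//|h] /negP. Qed.

Lemma epair_neq j a b : epair j a b -> a <> b.
Proof. by move=> [h _] ab; move: h; rewrite ab ltxx. Qed.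

Lemma rev_ex j a b : epair j a b -> exists i, L i b a.
Proof.
move=> e; apply: contrapT => nex.
have : Dlt a b.
  apply: L_all => i; apply: L_fwd; first exact: epair_neq e.
  by apply/negP => h; apply: nex; exists i.
move/Dlt_co/(_ j); case: e => h _; lra.
Qed.

Lemma SE_no2 (x y : 'I_n -> T) :
  (forall k k', k != k' -> forall l, co (x k) l < co (y k') l) ->
  forall i k k', k != k' -> L i (y k) (x k) -> L i (y k') (x k') -> False.
Proof.
move=> Hxy i k k' kk' h1 h2.
have h3 : L i (x k) (y k') by apply: L_Dlt; apply/Dlt_co; apply: Hxy.
have h4 : L i (x k') (y k) by apply: L_Dlt; apply/Dlt_co; apply: Hxy; rewrite eq_sym.
have := L_irr i (y k).
by rewrite (L_trans h1 (L_trans h3 (L_trans h2 h4))).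
Qed.

Lemma SE_uniq (x y : 'I_n -> T) : (forall k, epair k (x k) (y k)) ->
  (forall k k', k != k' -> forall l, co (x k) l < co (y k') l) ->
  forall k i i', L i (y k) (x k) -> L i' (y k) (x k) -> i = i'.
Proof.
move=> He Hxy k i i' h1 h2.
have [r Hr] := choice (fun k => rev_ex (He k)).
have r_inj : injective r.
  move=> k1 k2 e; apply/eqP; apply: contrapT => /negP k12.
  by apply: (SE_no2 Hxy k12 (Hr k1)); rewrite e; exact: Hr.
pose p := perm r_inj.
have rp t : r ((p^-1)%g t) = t by move: (permKV p t); rewrite permE.
have key t : L t (y k) (x k) -> t = r k.
  move=> ht; apply: contrapT => tk.
  have kk : (p^-1)%g t != k by apply/eqP => e; apply: tk; rewrite -e rp.
  by apply: (SE_no2 Hxy kk _ ht); rewrite -[X in R X _]rp; exact: Hr.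
by rewrite (key _ h1) (key _ h2).
Qed.

Lemma uniq_rev j a b i i' : epair j a b -> L i b a -> L i' b a -> i = i'.
Proof.
move=> e h1 h2; have [x [y [xj yj He Hxy]]] := SE_ext e.
by apply: (SE_uniq He Hxy (k := j)); rewrite xj yj.
Qed.

Lemma L_contract i a b x y : L i b a -> (x = a \/ Dlt a x) -> (y = b \/ Dlt y b) -> L i y x.
Proof.
move=> h [->|ax] [->|yb] //.
- exact: L_trans (L_Dlt i yb) h.
- exact: L_trans h (L_Dlt i ax).
- exact: L_trans (L_trans (L_Dlt i yb) h) (L_Dlt i ax).
Qed.


Lemma const_rev j a b c d i i' : epair j a b -> epair j c d ->
  L i b a -> L i' d c -> i = i'.
Proof.
move=> eab ecd h1 h2.
have [abj abk] := eab; have [cdj cdk] := ecd.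
pose mab l := (co a l + co b l) / 2.
pose mcd l := (co c l + co d l) / 2.
pose M := Num.max (co a j) (co c j).
pose m := Num.min (co b j) (co d j).
pose mn l := Num.min (co a l) (co c l).
pose mx l := Num.max (co b l) (co d l).
have Ma : co a j <= M by apply: maxl.
have Mc : co c j <= M by apply: maxr.
have mb : m <= co b j by apply: minl.
have md : m <= co d j by apply: minr.
have mna l : mn l <= co a l by apply: minl.
have mnc l : mn l <= co c l by apply: minr.
have mxb l : co b l <= mx l by apply: maxl.
have mxd l : co d l <= mx l by apply: maxr.
have [|x Hx] := @box (fun l => if l == j then M + 1 else co a l)
                     (fun l => if l == j then M + 2 else mab l).
  move=> l; case: eqP => [_|/eqP lj]; first lra.
  by have := abk l lj; rewrite /mab; lra.
have [|y Hy] := @box (fun l => if l == j then m - 2 else mab l)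
                     (fun l => if l == j then m - 1 else co b l).
  move=> l; case: eqP => [_|/eqP lj]; first lra.
  by have := abk l lj; rewrite /mab; lra.
have [|x' Hx'] := @box (fun l => if l == j then mcd j else mn l - 2)
                       (fun l => if l == j then co c j else mn l - 1).
  by move=> l; case: eqP => [_|/eqP lj]; rewrite /mcd; lra.
have [|y' Hy'] := @box (fun l => if l == j then co d j else mx l + 1)
                       (fun l => if l == j then mcd j else mx l + 2).
  by move=> l; case: eqP => [_|/eqP lj]; rewrite /mcd; lra.
have exy : epair j x y.
  split; first by have := Hx j; have := Hy j; rewrite eqxx; lra.
  move=> l /negPf lj; have := Hx l; have := Hy l; rewrite lj; lra.
have exy' : epair j x' y'.
  split; first by have := Hx' j; have := Hy' j; rewrite eqxx; lra.
  move=> l /negPf lj; have := Hx' l; have := Hy' l; rewrite lj.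
  by have := abk l (negbT lj); have := mna l; have := mxb l; lra.
have ax : Dlt a x.
  apply/Dlt_co => l; have := Hx l; case: eqP => [->|_]; lra.
have yb : Dlt y b.
  apply/Dlt_co => l; have := Hy l; case: eqP => [->|_]; lra.
have x'x : Dlt x' x.
  apply/Dlt_co => l; have := Hx' l; have := Hx l; case: eqP => [->|_]; first lra.
  by have := mna l; lra.
have yy' : Dlt y y'.
  apply/Dlt_co => l; have := Hy' l; have := Hy l; case: eqP => [->|_]; first lra.
  by have := mxb l; lra.
have x'c : Dlt x' c.
  apply/Dlt_co => l; have := Hx' l; case: eqP => [->|_]; first lra.
  by have := mnc l; lra.
have dy' : Dlt d y'.
  apply/Dlt_co => l; have := Hy' l; case: eqP => [->|_]; first lra.
  by have := mxd l; lra.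
have Lyx : L i y x by apply: L_contract h1 _ _; right.
have [q Hq] := rev_ex exy'.
have Lyx' : L q y x by apply: L_contract Hq _ _; right.
have Ldc : L q d c by apply: L_contract Hq _ _; right.
by rewrite (uniq_rev exy Lyx Lyx') (uniq_rev ecd Ldc h2).
Qed.

Lemma pi_ex j : exists i, forall a b, epair j a b -> L i b a.
Proof.
have [a0 [b0 e0]] := ex_epair j.
have [i Hi] := rev_ex e0.
exists i => a b e; have [i' Hi'] := rev_ex e.
by rewrite (const_rev e0 e Hi Hi').
Qed.


Definition Sba (a b : T) : {set 'I_n} := finset (fun l => (co b l < co a l)%R).

Definition piR : 'I_n -> 'I_n := projT1 (choice pi_ex).
Lemma piR_spec j a b : epair j a b -> L (piR j) b a.
Proof. exact: (projT2 (choice pi_ex) j). Qed.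

Lemma piR_inj : injective piR.
Proof.
move=> j j' e; apply/eqP; apply: contrapT => /negP jj.
have [a0 [b0 e0]] := ex_epair j.
have [x [y [_ _ He Hxy]]] := SE_ext e0.
apply: (SE_no2 Hxy jj (piR_spec (He j))).
by rewrite e; apply: piR_spec.
Qed.

Lemma L_coord_m (m : nat) j a b :
  (#|Sba a b| <= m)%N -> co a j < co b j -> L (piR j) a b.
Proof.
elim: m a b => [|m IH] a b.
  rewrite leqn0 cards_eq0 => /eqP S0 abj.
  have ab : a <> b by move=> e; move: abj; rewrite e ltxx.
  apply: L_Dlt; apply/Dlt_co => l.
  have := co_lt_total l ab; case/orP => // h.
  have : l \in Sba a b by rewrite inE.
  by rewrite S0 inE.
move=> Sm abj.
have ab : a <> b by move=> e; move: abj; rewrite e ltxx.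
have [S0|[k kS]] := set_0Vmem (Sba a b).
  apply: L_Dlt; apply/Dlt_co => l.
  have := co_lt_total l ab; case/orP => // h.
  have : l \in Sba a b by rewrite inE.
  by rewrite S0 inE.
move: (kS); rewrite inE => bak.
have kj : k != j by apply/eqP => e; move: bak; rewrite e; lra.
have [|c Hc] := @box (fun l => if l == k then co b k - 1 else co a l)
   (fun l => if l == k then co b k else (if co a l < co b l then co b l else co a l + 1)).
  move=> l; case: eqP => _; first lra.
  by case: ifP => h; lra.
have eac : epair k a c.
  split; first by have := Hc k; rewrite eqxx; lra.
  by move=> l /negPf lk; have := Hc l; rewrite lk; lra.
have Lac : L (piR j) a c.
  apply: L_fwd; first exact: epair_neq eac.
  apply/negP => h; have := piR_inj (uniq_rev eac h (piR_spec eac)).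
  by move/eqP; rewrite eq_sym (negPf kj).
have Lcb : L (piR j) c b.
  apply: IH.
    have : Sba c b \proper Sba a b.
      apply/fintype.properP; split.
        apply/fintype.subsetP => l; rewrite !inE => h.
        have := Hc l; case: eqP => [->|_]; first lra.
        case: ifP => h'; first lra.
        have := co_lt_total l ab; rewrite h' /= => h'' _; exact: h''.
      exists k => //; rewrite inE; have := Hc k; rewrite eqxx; lra.
    move/proper_card => h; rewrite -ltnS; exact: leq_trans h Sm.
  have jk : j != k by rewrite eq_sym.
  have := Hc j; rewrite (negPf jk).
  by rewrite abj; lra.
exact: L_trans Lac Lcb.
Qed.

Lemma L_coord j a b : R (piR j) (a, b) = (co a j < co b j).
Proof.
apply/idP/idP => [h|h]; last exact: (@L_coord_m #|'I_n| j a b (max_card _) h).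
have ab : a <> b by move=> e; move: h; rewrite e (negPf (L_irr _ _)).
have := co_lt_total j ab; case/orP => // h'.
have := L_asym h; rewrite (@L_coord_m #|'I_n| j b a (max_card _) h') //.
Qed.

End Realizer.


Lemma beq (P Q : bool) : (P -> Q) -> (Q -> P) -> P = Q.
Proof. by move=> h1 h2; apply/idP/idP. Qed.

Definition compat (rho : {perm 'I_n}) (p q : T * T) :=
  forall j, (co p.1 j < co q.1 j) = (co p.2 (rho j) < co q.2 (rho j)).
Definition PI rho (s : seq (T * T)) :=
  forall p q, p \in s -> q \in s -> compat rho p q.

Lemma compat_refl rho p : compat rho p p.
Proof. by move=> j; rewrite !ltxx. Qed.

Lemma forth_ex rho s : PI rho s -> forall x, exists y, PI rho ((x, y) :: s).
Proof.
move=> Ps x.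
have [[y xy]|nx] := pselect (exists y, (x, y) \in s).
  exists y => p q; rewrite !in_cons => /orP [/eqP ->|ps] /orP [/eqP ->|qs]; exact: Ps.
have qx q : q \in s -> q.1 <> x.
  by move=> qs e; apply: nx; exists q.2; rewrite -e -surjective_pairing.
pose Ls j := [seq co q.2 (rho j) | q <- s & co q.1 j < co x j].
pose Us j := [seq co q.2 (rho j) | q <- s & co x j < co q.1 j].
have H j : exists lh : rat * rat, [/\ lh.1 < lh.2, forall l, l \in Ls j -> l <= lh.1
     & forall u, u \in Us j -> lh.2 <= u].
  have [|lo [hi [? ? ?]]] := @seq_lohi (Ls j) (Us j); last by exists (lo, hi).
  move=> l u /mapP [q + ->] /mapP [q' + ->]; rewrite !mem_filter => /andP [h1 qs] /andP [h2 q's].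
  by rewrite -(Ps q q' qs q's j); exact: lt_trans h1 h2.
have [lh Hlh] := choice H.
have [|y Hy] := @box (fun m => (lh ((rho^-1)%g m)).1) (fun m => (lh ((rho^-1)%g m)).2).
  by move=> m; case: (Hlh ((rho^-1)%g m)).
have Hy' j : (lh j).1 < co y (rho j) < (lh j).2 by move: (Hy (rho j)); rewrite permK.
exists y.
have key q : q \in s -> compat rho (x, y) q /\ compat rho q (x, y).
  move=> qs; have qx' := qx q qs.
  split => j /=; have [H1 H2 H3] := Hlh j; have := Hy' j;
  (have := co_lt_total j qx'; case/orP => h).
  - have qf : q \in [seq q0 <- s | co q0.1 j < co x j] by rewrite mem_filter h qs.
    move=> hy; have /= hq := H2 _ (map_f (fun q => co q.2 (rho j)) qf).
    by apply: beq => ?; lra.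
  - have qf : q \in [seq q0 <- s | co x j < co q0.1 j] by rewrite mem_filter h qs.
    move=> hy; have /= hq := H3 _ (map_f (fun q => co q.2 (rho j)) qf).
    by apply: beq => ?; lra.
  - have qf : q \in [seq q0 <- s | co q0.1 j < co x j] by rewrite mem_filter h qs.
    move=> hy; have /= hq := H2 _ (map_f (fun q => co q.2 (rho j)) qf).
    by apply: beq => ?; lra.
  - have qf : q \in [seq q0 <- s | co x j < co q0.1 j] by rewrite mem_filter h qs.
    move=> hy; have /= hq := H3 _ (map_f (fun q => co q.2 (rho j)) qf).
    by apply: beq => ?; lra.
move=> p q; rewrite !in_cons => /orP [/eqP ->|ps] /orP [/eqP ->|qs].
- exact: compat_refl.
- exact: (key q qs).1.
- exact: (key p ps).2.
- exact: Ps.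
Qed.


Definition sw (p : T * T) : T * T := (p.2, p.1).

Lemma back_ex rho s : PI rho s -> forall y, exists x, PI rho ((x, y) :: s).
Proof.
move=> Ps y.
have Ps' : PI (rho^-1)%g (map sw s).
  move=> p q /mapP [p0 p0s ->] /mapP [q0 q0s ->] m /=.
  by rewrite (Ps p0 q0 p0s q0s ((rho^-1)%g m)) permKV.
have [x Hx] := forth_ex Ps' y.
exists x => p q ps qs j.
have ps' : sw p \in (y, x) :: map sw s.
  by move: ps; rewrite !in_cons => /orP [/eqP ->|ps]; rewrite ?eqxx // (map_f sw ps) orbT.
have qs' : sw q \in (y, x) :: map sw s.
  by move: qs; rewrite !in_cons => /orP [/eqP ->|qs]; rewrite ?eqxx // (map_f sw qs) orbT.
by have := Hx _ _ ps' qs' (rho j); rewrite /= permK => ->.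
Qed.

Lemma enum_ex : exists e : nat -> T, forall x, exists k, e k = x.
Proof.
have [|x0 _] := @box (fun _ => 0) (fun _ => 1) => //.
have i0 : 'I_n by exists 0%N; apply: leq_trans n2.
pose code (x : T) : nat := pickle [ffun i => co x i].
have code_inj : injective code.
  move=> x y /(pcan_inj pickleK_inv) /ffunP /(_ i0); rewrite !ffunE; exact: eq_co.
pose e k := match pselect (exists x, code x = k) with
            | left h => projT1 (cid h) | right _ => x0 end.
exists e => x; exists (code x); rewrite /e.
case: pselect => [h|[]]; last by exists x.
by apply: code_inj; exact: (projT2 (cid h)).
Qed.

Section Stages.
Variable rho : {perm 'I_n}.
Variable e : nat -> T.

Definition fo (s : seq (T * T)) (x : T) : T :=
  match pselect (exists y, PI rho ((x, y) :: s)) with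
  | left h => projT1 (cid h) | right _ => x end.
Definition ba (s : seq (T * T)) (y : T) : T :=
  match pselect (exists x, PI rho ((x, y) :: s)) with
  | left h => projT1 (cid h) | right _ => y end.

Lemma fo_PI s x : PI rho s -> PI rho ((x, fo s x) :: s).
Proof.
move=> Ps; rewrite /fo; case: pselect => [h|nh]; first exact: (projT2 (cid h)).
by exfalso; apply: nh; exact: forth_ex.
Qed.

Lemma ba_PI s y : PI rho s -> PI rho ((ba s y, y) :: s).
Proof.
move=> Ps; rewrite /ba; case: pselect => [h|nh]; first exact: (projT2 (cid h)).
by exfalso; apply: nh; exact: back_ex.
Qed.

Definition st1 (s : seq (T * T)) (k : nat) := (e k, fo s (e k)) :: s.

Fixpoint stage (k : nat) : seq (T * T) :=
  if k is k'.+1 then (ba (st1 (stage k') k') (e k'), e k') :: st1 (stage k') k'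
  else [::].

Lemma stage_PI k : PI rho (stage k).
Proof.
elim: k => [|k IH] /=; first by move=> p q.
by apply: ba_PI; apply: fo_PI.
Qed.

Lemma stage_mono k k' : (k <= k')%N -> {subset stage k <= stage k'}.
Proof.
elim: k' => [|k' IH]; first by rewrite leqn0 => /eqP ->.
rewrite leq_eqVlt => /orP [/eqP ->|]; first by [].
rewrite ltnS => /IH h p /h pk /=.
by rewrite !in_cons pk !orbT.
Qed.

Lemma stage_compat p q k k' : p \in stage k -> q \in stage k' -> compat rho p q.
Proof.
move=> pk qk.
have h1 := stage_mono (leq_maxl k k') pk.
have h2 := stage_mono (leq_maxr k k') qk.
exact: (stage_PI h1 h2).
Qed.

End Stages.

Lemma compat_fun rho x y y' : compat rho (x, y) (x, y') -> compat rho (x, y') (x, y) -> y = y'.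
Proof.
have i0 : 'I_n by exists 0%N; apply: leq_trans n2.
move=> /(_ i0) /= h1 /(_ i0) /= h2.
apply: (@eq_co _ _ (rho i0)); apply/eqP; rewrite eq_le !leNgt.
by rewrite -h1 -h2 !ltxx.
Qed.

Lemma compat_inj rho x x' y : compat rho (x, y) (x', y) -> compat rho (x', y) (x, y) -> x = x'.
Proof.
have i0 : 'I_n by exists 0%N; apply: leq_trans n2.
move=> /(_ i0) /= h1 /(_ i0) /= h2.
apply: (@eq_co _ _ i0); apply/eqP; rewrite eq_le !leNgt.
by rewrite h1 h2 !ltxx.
Qed.

Lemma bf (rho : {perm 'I_n}) : exists g : T -> T, bijective g /\
  forall a b j, (co a j < co b j) = (co (g a) (rho j) < co (g b) (rho j)).
Proof.
have [e esurj] := enum_ex.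
have [idx Hidx] := choice esurj.
pose g x := fo rho (stage rho e (idx x)) x.
pose h y := ba rho (st1 rho e (stage rho e (idx y)) (idx y)) y.
have gin x : (x, g x) \in stage rho e (idx x).+1.
  rewrite /= in_cons /st1 in_cons; apply/orP; right; apply/orP; left; apply/eqP.
  by rewrite /g Hidx.
have hin y : (h y, y) \in stage rho e (idx y).+1.
  rewrite /= in_cons; apply/orP; left; apply/eqP.
  by rewrite /h Hidx.
exists g; split.
  exists h => [x|y].
  - apply: (@compat_inj rho _ _ (g x)).
    + exact: stage_compat (hin (g x)) (gin x).
    + exact: stage_compat (gin x) (hin (g x)).
  - apply: (@compat_fun rho (h y)).
    + exact: stage_compat (gin (h y)) (hin y).
    + exact: stage_compat (hin y) (gin (h y)).
by move=> a b j; apply: (stage_compat (gin a) (gin b)).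
Qed.


Lemma finvK (g : T -> T) x : bijective g -> Defs.finv g (g x) = x.
Proof.
move=> [g' gK _]; have gi := can_inj gK; rewrite /Defs.finv; case: pselect => [h|nh]; last first.
  by exfalso; apply: nh; exists x.
by apply: gi; exact: (projT2 (cid h)).
Qed.

Lemma finvKV (g : T -> T) a : bijective g -> g (Defs.finv g a) = a.
Proof.
move=> [g' gK Kg]; rewrite /Defs.finv; case: pselect => [h|nh].
  exact: (projT2 (cid h)).
by exfalso; apply: nh; exists (g' a); rewrite Kg.
Qed.

Lemma finv_comp (g h : T -> T) a : bijective g -> bijective h ->
  Defs.finv (g \o h) a = Defs.finv h (Defs.finv g a).
Proof.
move=> bg bh.
have ea : (g \o h) (Defs.finv h (Defs.finv g a)) = a by rewrite /= !finvKV.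
have bgh : bijective (g \o h).
  case: bg => g' gK Kg; case: bh => h' hK Kh.
  by apply: (@Bijective _ _ _ (h' \o g')) => x /=; rewrite ?gK ?hK ?Kg ?Kh.
by rewrite -{1}ea finvK.
Qed.

Lemma part1 (g : FunSp D) (R : RelSp D) : AutD D g -> Rn D R -> Rn D (logic_act g R).
Proof.
move=> [bg Hg] RR; split.
  move=> i; split.
  - by move=> a; exact: (L_irr RR).
  - by move=> a b c; exact: (L_trans RR).
  - move=> a b ab; apply: (L_tot RR) => // e; apply: ab.
    by rewrite -(finvKV a bg) -(finvKV b bg) e.
move=> a b; rewrite /logic_act /=; split.
  move/(L_all RR)/Hg; by rewrite !finvKV.
move=> ab i; apply: (L_Dlt RR); apply/Hg; by rewrite !finvKV.
Qed.

Lemma part2 (R : RelSp D) : logic_act (id : FunSp D) R = R.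
Proof.
apply: funext => i; apply: funext => -[a b] /=.
have bid : bijective (id : T -> T) by exists id.
by rewrite /logic_act /= (finvK a bid) (finvK b bid).
Qed.

Lemma part3 (g h : FunSp D) (R : RelSp D) : AutD D g -> AutD D h ->
  logic_act ((g \o h) : FunSp D) R = logic_act g (logic_act h R).
Proof.
move=> [bg _] [bh _].
apply: funext => i; apply: funext => -[a b] /=.
by rewrite /logic_act !(finv_comp _ bg bh).
Qed.

Lemma part5 (R S : RelSp D) : Rn D R -> Rn D S ->
  exists2 g, AutD D g & logic_act g R = S.
Proof.
move=> RR SS.
pose pR := perm (@piR_inj R RR); pose pS := perm (@piR_inj S SS).
have [g [bg Hg]] := bf (pR * pS^-1)%g.
exists (g : FunSp D).
  split => // a b; rewrite !Dlt_co; split.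
    move=> h m; have := h (((pR * pS^-1)^-1)%g m); rewrite Hg permKV; exact.
  by move=> h j; rewrite Hg; exact: h.
apply: funext => i; apply: funext => -[a b] /=.
rewrite /logic_act /=.
set m := (pR^-1)%g i.
have im : i = pR m by rewrite /m permKV.
set k := (pS^-1)%g i.
have ik : i = pS k by rewrite /k permKV.
rewrite {1}im permE (L_coord RR) Hg !finvKV //.
have -> : (pR * pS^-1)%g m = k by rewrite permM -im.
by rewrite ik permE (L_coord SS).
Qed.


Lemma part4 : {within AutD D `*` Rn D,
         continuous (fun p : FunSp D * RelSp D => logic_act p.1 p.2)}.
Proof.
apply/subspace_continuousP => -[g0 R0] [/= [bg0 _] _].
rewrite /from_subspace /=.
apply: ptws_cvg => i.
apply: ptws_cvg => -[a b].
apply/discrete_cvg.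
set c := Defs.finv g0 a; set d := Defs.finv g0 b.
have N1 : nbhs g0 [set g : FunSp D | g c = g0 c].
  exact: (@proj_continuous T (fun _ => discrete_topology T) c g0 _ (discrete_set1 (g0 c))).
have N1' : nbhs g0 [set g : FunSp D | g d = g0 d].
  exact: (@proj_continuous T (fun _ => discrete_topology T) d g0 _ (discrete_set1 (g0 d))).
have N2 : nbhs R0 [set R : RelSp D | R i (c, d) = R0 i (c, d)].
  have h1 := @proj_continuous _ (fun _ : (T * T)%type => bool) (c, d) (R0 i) _
     (discrete_set1 (R0 i (c, d))).
  exact: (@proj_continuous 'I_n (fun _ => {ptws (T * T)%type -> bool}) i R0 _ h1).
have : nbhs (g0, R0) (fun p : FunSp D * RelSp D => (AutD D `*` Rn D) p ->
          logic_act p.1 p.2 i (a, b) = logic_act g0 R0 i (a, b)).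
  exists ([set g : FunSp D | g c = g0 c /\ g d = g0 d], [set R : RelSp D | R i (c, d) = R0 i (c, d)]).
    split => //; exact: filterI N1 N1'.
  move=> [g R] [/= [gc gd] Rcd] [/= [bg _] _].
  rewrite /logic_act /=.
  have -> : Defs.finv g a = c.
    have ga : g c = a by rewrite gc /c finvKV.
    by rewrite -ga finvK.
  have -> : Defs.finv g b = d.
    have gb : g d = b by rewrite gd /d finvKV.
    by rewrite -gb finvK.
  exact: Rcd.
by [].
Qed.

Lemma main :
  [/\ (forall g R, AutD D g -> Rn D R -> Rn D (logic_act g R)),
      (forall R, Rn D R -> logic_act (id : FunSp D) R = R),
      (forall g h R, AutD D g -> AutD D h -> Rn D R ->
         logic_act ((g \o h) : FunSp D) R = logic_act g (logic_act h R)),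
      {within AutD D `*` Rn D,
         continuous (fun p : FunSp D * RelSp D => logic_act p.1 p.2)} &
      (forall R S, Rn D R -> Rn D S -> exists2 g, AutD D g & logic_act g R = S)].
Proof.
split.
- exact: part1.
- by move=> R _; exact: part2.
- by move=> g h R Ag Ah _; exact: part3.
- exact: part4.
- exact: part5.
Qed.

End Basics.

Local Close Scope ring_scope.

Theorem lemma6p6 (n : nat) (D : set (Qn n)) :
  (2 <= n)%N -> dense D -> no_common_coord D ->
  [/\ (forall g R, AutD D g -> Rn D R -> Rn D (logic_act g R)),
      (forall R, Rn D R -> logic_act (id : FunSp D) R = R),
      (forall g h R, AutD D g -> AutD D h -> Rn D R ->
         logic_act ((g \o h) : FunSp D) R = logic_act g (logic_act h R)),
      {within AutD D `*` Rn D,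
         continuous (fun p : FunSp D * RelSp D => logic_act p.1 p.2)} &
      (forall R S, Rn D R -> Rn D S -> exists2 g, AutD D g & logic_act g R = S)].
Proof. by move=> n2 dD ncD; apply: main. Qed.
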